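(* Let $\phi$ be an LTL formula that is satisfiable. Then every finished tableau for $\phi$ is successful, i.e. it has at least one ticked leaf. This holds regardless of the order in which leaves are chosen for extension, regardless of which applicable static rule is used at each step, and regardless of which pivot formula it is applied to.
   Context: LTL formulas over a countable set $AP$ of atoms are built from atoms $p\in AP$ and the constant $\top$ using $\neg\alpha$, $\alpha\wedge\beta$, $X\alpha$ and $\alpha U\beta$. We write $\bot$ for $\neg\top$. A structure is a triple $(S,R,g)$ where $S$ is a finite set, $R\subseteq S\times S$ is serial (every state has an $R$-successor), and $g:S\to 2^{AP}$. A fullpath is a sequence $\sigma=\langle s_0,s_1,\dots\rangle$ with $(s_i,s_{i+1})\in R$ for all $i$. We write $\sigma_i=s_i$ and $\sigma_{\ge j}=\langle s_j,s_{j+1},\dots\rangle$. Truth is defined as follows: - $\sigma\models p$ iff $p\in g(\sigma_0)$; - $\sigma\models\top$ always; - $\neg$ and $\wedge$ are classical; - $\sigma\models X\alpha$ iff $\sigma_{\ge1}\models\alpha$; - $\sigma\models\alpha U\beta$ iff there is $i\ge0$ with $\sigma_{\ge i}\models\beta$ and $\sigma_{\ge j}\models\alpha$ for all $0\le j<i$. A formula is satisfiable iff it is true on some fullpath of some structure. Tableau. A tableau for $\phi$ is a finite rooted tree. Each node $u$ carries a finite set of formulas $\Gamma_u$ (its label), and the root is labelled $\{\phi\}$. We write $u<v$ when $u$ is a proper ancestor of $v$ and $u\le v$ when it is an ancestor or equal. A formula is elementary if it is an atom, a negated atom, or of the form $X\alpha$ or $\neg X\alpha$. A label is poised if it is nonempty,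 contains no pair $\alpha,\neg\alpha$, and all its formulas are elementary. An $X$-eventuality of a poised label is a member of the form $X(\alpha U\beta)$. Static rules are written ''parent label / children'', where $\{\chi\}\mathbin{\dot\cup}\Delta$ means $\chi\notin\Delta$: - EMPTY: $\{\}$ / tick. - CONTRADICTION: $\{\alpha,\neg\alpha\}\mathbin{\dot\cup}\Delta$ / cross. - $\neg\top$: $\{\neg\top\}\mathbin{\dot\cup}\Delta$ / cross. - $\top$: $\{\top\}\mathbin{\dot\cup}\Delta$ / $\Delta$. - $\wedge$: $\{\alpha\wedge\beta\}\mathbin{\dot\cup}\Delta$ / $\Delta\cup\{\alpha,\beta\}$. - $U$: $\{\alpha U\beta\}\mathbin{\dot\cup}\Delta$ / two children $\Delta\cup\{\beta\}$ and $\Delta\cup\{\alpha,X(\alpha U\beta)\}$. - $\neg\neg$: $\{\neg\neg\alpha\}\mathbin{\dot\cup}\Delta$ / $\Delta\cup\{\alpha\}$. - $\neg\wedge$: $\{\neg(\alpha\wedge\beta)\}\mathbin{\dot\cup}\Delta$ / two children $\Delta\cup\{\neg\alpha\}$ and $\Delta\cup\{\neg\beta\}$. - $\neg U$: $\{\neg(\alpha U\beta)\}\mathbin{\dot\cup}\Delta$ / two children $\Delta\cup\{\neg\alpha,\neg\beta\}$ and $\Delta\cup\{\neg\beta,X\neg(\alpha U\beta)\}$. Non-static rules apply only to a leaf $v$ with poised label. The first applicable one in the following list is used. - LOOP: if some $u<v$ has poised $\Gamma_u\supseteq\Gamma_v$, and for every $X(\alpha U\beta)\in\Gamma_u$ there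 is $w$ with $u<w\le v$ and $\beta\in\Gamma_w$, then $v$ is ticked. - PRUNE: if $u<v'<v$ all have the same poised label $\Gamma$, and for every $X(\alpha U\beta)\in\Gamma$, whenever some $x$ with $v'<x\le v$ has $\beta\in\Gamma_x$ there is $y$ with $u<y\le v'$ and $\beta\in\Gamma_y$, then $v$ is crossed. - PRUNE$_0$: if $u<v$ share the same poised label $\Gamma$, $\Gamma$ contains at least one $X$-eventuality, and for no $X(\alpha U\beta)\in\Gamma$ is there $x$ with $u<x\le v$ and $\beta\in\Gamma_x$, then $v$ is crossed. - TRANSITION: otherwise $v$ gets one child labelled $\{\alpha: X\alpha\in\Gamma_v\}\cup\{\neg\alpha:\neg X\alpha\in\Gamma_v\}$. A tableau is constructed from the root by repeatedly choosing any leaf that is neither ticked nor crossed and applying an applicable rule. For non-poised labels this means any applicable static rule to any suitable pivot formula. A tableau is finished if every leaf is ticked or crossed, and successful if some leaf is ticked. *)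

(* Defs.v *)
From Stdlib Require Import List Arith Lia.
Import ListNotations.

Inductive form : Type :=
| Atom : nat -> form
| Top : form
| Neg : form -> form
| And : form -> form -> form
| Next : form -> form
| Until : form -> form -> form.

Definition form_eq_dec : forall x y : form, {x = y} + {x <> y}.
Proof. decide equality; apply Nat.eq_dec. Defined.

Definition suffix {St : Type} (j : nat) (sigma : nat -> St) : nat -> St :=
  fun i => sigma (j + i).

Fixpoint sat {St : Type} (g : St -> nat -> Prop) (sigma : nat -> St) (f : form)
  : Prop :=
  match f with
  | Atom p => g (sigma 0) p
  | Top => True
  | Neg a => ~ sat g sigma a
  | And a b => sat g sigma a /\ sat g sigma b
  | Next a => sat g (suffix 1 sigma) a
  | Until a b =>
      exists i, sat g (suffix i sigma) b /\
                forall j, j < i -> sat g (suffix j sigma) a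
  end.

Definition finite_type (St : Type) : Prop := exists l : list St, forall s, In s l.
Definition serial {St : Type} (R : St -> St -> Prop) : Prop :=
  forall s, exists t, R s t.
Definition fullpath {St : Type} (R : St -> St -> Prop) (sigma : nat -> St) : Prop :=
  forall i, R (sigma i) (sigma (S i)).

Definition satisfiable (phi : form) : Prop :=
  exists (St : Type) (R : St -> St -> Prop) (g : St -> nat -> Prop)
         (sigma : nat -> St),
    finite_type St /\ serial R /\ fullpath R sigma /\ sat g sigma phi.

(* A label is a finite set of formulas, represented by a list; set-level
   notions (membership, inclusion, equality of labels) are taken up to
   membership. *)
Definition label := list form.

Definition same_label (G1 G2 : label) : Prop := forall x, In x G1 <-> In x G2.

Definition elementary (f : form) : Prop :=
  match f with
  | Atom _ => True
  | Neg (Atom _) => True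
  | Next _ => True
  | Neg (Next _) => True
  | _ => False
  end.

Definition poised (G : label) : Prop :=
  G <> [] /\
  (forall a, In a G -> ~ In (Neg a) G) /\
  (forall f, In f G -> elementary f).

(* Delta, where G = {chi} disjoint-union Delta *)
Definition minus (G : label) (chi : form) : label := remove form_eq_dec chi G.

Inductive static_result : Type :=
| SRtick : static_result
| SRcross : static_result
| SRchildren : list label -> static_result.

Inductive static_rule (G : label) : static_result -> Prop :=
| st_empty : G = [] -> static_rule G SRtick
| st_contradiction : forall a, In a G -> In (Neg a) G -> static_rule G SRcross
| st_negtop : In (Neg Top) G -> static_rule G SRcross
| st_top : In Top G -> static_rule G (SRchildren [minus G Top])
| st_and : forall a b, In (And a b) G ->
    static_rule G (SRchildren [minus G (And a b) ++ [a; b]])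
| st_until : forall a b, In (Until a b) G ->
    static_rule G (SRchildren [minus G (Until a b) ++ [b];
                               minus G (Until a b) ++ [a; Next (Until a b)]])
| st_negneg : forall a, In (Neg (Neg a)) G ->
    static_rule G (SRchildren [minus G (Neg (Neg a)) ++ [a]])
| st_negand : forall a b, In (Neg (And a b)) G ->
    static_rule G (SRchildren [minus G (Neg (And a b)) ++ [Neg a];
                               minus G (Neg (And a b)) ++ [Neg b]])
| st_neguntil : forall a b, In (Neg (Until a b)) G ->
    static_rule G (SRchildren [minus G (Neg (Until a b)) ++ [Neg a; Neg b];
                               minus G (Neg (Until a b)) ++
                                 [Neg b; Next (Neg (Until a b))]]).

Definition next_label (G : label) : label :=
  flat_map (fun f => match f with
                     | Next a => [a]
                     | Neg (Next a) => [Neg a]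
                     | _ => []
                     end) G.

(* ---------- Non-static rule conditions ----------
   [anc] lists the labels of the proper ancestors of the leaf v, root first;
   [G] is the label of v.  The branch is [anc ++ [G]], v has index
   [length anc]; node at index i is an ancestor of the node at index j iff
   i < j. *)

Definition nodeL (anc : list label) (G : label) (i : nat) : label :=
  nth i (anc ++ [G]) [].

Definition loop_cond (anc : list label) (G : label) : Prop :=
  exists i, i < length anc /\
    poised (nodeL anc G i) /\
    incl G (nodeL anc G i) /\
    forall a b, In (Next (Until a b)) (nodeL anc G i) ->
      exists w, i < w <= length anc /\ In b (nodeL anc G w).

Definition prune_cond (anc : list label) (G : label) : Prop :=
  exists i j, i < j < length anc /\
    same_label (nodeL anc G i) G /\ same_label (nodeL anc G j) G /\ poised G /\
    forall a b, In (Next (Until a b)) G ->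
      (exists x, j < x <= length anc /\ In b (nodeL anc G x)) ->
      exists y, i < y <= j /\ In b (nodeL anc G y).

Definition prune0_cond (anc : list label) (G : label) : Prop :=
  exists i, i < length anc /\
    same_label (nodeL anc G i) G /\ poised G /\
    (exists a b, In (Next (Until a b)) G) /\
    ~ (exists a b x, In (Next (Until a b)) G /\ i < x <= length anc /\
                     In b (nodeL anc G x)).

(* A finite rooted tree whose leaves are all ticked or crossed
   (i.e. a finished tree); inner nodes have had a rule applied. *)
Inductive tableau : Type :=
| Ticked : label -> tableau
| Crossed : label -> tableau
| Inner : label -> list tableau -> tableau.

Definition tlabel (t : tableau) : label :=
  match t with Ticked G | Crossed G | Inner G _ => G end.

(* [valid anc t]: every node of t was produced by a correct rule
   application, where [anc] are the labels of the ancestors of the root of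
   [t] (root first). *)
Inductive valid : list label -> tableau -> Prop :=
| v_static_tick : forall anc G,
    static_rule G SRtick -> valid anc (Ticked G)
| v_static_cross : forall anc G,
    static_rule G SRcross -> valid anc (Crossed G)
| v_static_children : forall anc G cs,
    static_rule G (SRchildren (map tlabel cs)) ->
    (forall c, In c cs -> valid (anc ++ [G]) c) ->
    valid anc (Inner G cs)
| v_loop : forall anc G,
    poised G -> loop_cond anc G -> valid anc (Ticked G)
| v_prune : forall anc G,
    poised G -> ~ loop_cond anc G -> prune_cond anc G -> valid anc (Crossed G)
| v_prune0 : forall anc G,
    poised G -> ~ loop_cond anc G -> ~ prune_cond anc G -> prune0_cond anc G ->
    valid anc (Crossed G)
| v_transition : forall anc G c,
    poised G -> ~ loop_cond anc G -> ~ prune_cond anc G -> ~ prune0_cond anc G ->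
    tlabel c = next_label G ->
    valid (anc ++ [G]) c ->
    valid anc (Inner G [c]).

Definition finished_tableau (phi : form) (t : tableau) : Prop :=
  valid [] t /\ tlabel t = [phi].

Inductive has_ticked_leaf : tableau -> Prop :=
| htl_leaf : forall G, has_ticked_leaf (Ticked G)
| htl_inner : forall G cs c, In c cs -> has_ticked_leaf c ->
    has_ticked_leaf (Inner G cs).

Definition successful (t : tableau) : Prop := has_ticked_leaf t.

(* Main.v *)
Require Import Defs.
From Stdlib Require Import List Arith Lia Classical.
Import ListNotations.

Lemma sat_ext {St} (g : St -> nat -> Prop) : forall f (s1 s2 : nat -> St),
  (forall i, s1 i = s2 i) -> (sat g s1 f <-> sat g s2 f).
Proof.
  induction f; intros s1 s2 H; simpl.
  - rewrite H; tauto.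
  - tauto.
  - rewrite (IHf s1 s2 H); tauto.
  - rewrite (IHf1 s1 s2 H), (IHf2 s1 s2 H); tauto.
  - apply IHf. intros i; unfold suffix; apply H.
  - split; intros [i [Hb Ha]]; exists i; split.
    + revert Hb; apply IHf2; intro k; unfold suffix; auto.
    + intros j Hj. generalize (Ha j Hj); apply IHf1; intro k; unfold suffix; auto.
    + revert Hb; apply IHf2; intro k; unfold suffix; auto.
    + intros j Hj. generalize (Ha j Hj); apply IHf1; intro k; unfold suffix; auto.
Qed.

Section W.
Variable St : Type.
Variable g : St -> nat -> Prop.
Variable s : nat -> St.

Definition Tr (c : nat) (f : form) : Prop := sat g (suffix c s) f.
Definition sat_all (c : nat) (G : label) : Prop := forall f, In f G -> Tr c f.

Lemma Tr_shift : forall c i f, sat g (suffix i (suffix c s)) f <-> Tr (c + i) f.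
Proof. intros. unfold Tr. apply sat_ext. intro k. unfold suffix. f_equal. lia. Qed.

Lemma Tr_Next : forall c f, Tr c (Next f) <-> Tr (S c) f.
Proof. intros. unfold Tr at 1. simpl. rewrite Tr_shift. replace (c+1) with (S c) by lia. tauto. Qed.

Lemma Tr_Until : forall c a b, Tr c (Until a b) <->
  exists i, Tr (c + i) b /\ forall j, j < i -> Tr (c + j) a.
Proof.
  intros. unfold Tr at 1. simpl. split; intros [i [H1 H2]]; exists i; split.
  - apply Tr_shift; auto.
  - intros j Hj; apply Tr_shift; auto.
  - apply Tr_shift; auto.
  - intros j Hj; apply Tr_shift; auto.
Qed.

Lemma Tr_Neg : forall c f, Tr c (Neg f) <-> ~ Tr c f.
Proof. intros; unfold Tr; simpl; tauto. Qed.
Lemma Tr_And : forall c a b, Tr c (And a b) <-> Tr c a /\ Tr c b.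
Proof. intros; unfold Tr; simpl; tauto. Qed.


Definition pres (G : label) a b := In (Until a b) G \/ In (Next (Until a b)) G.

Lemma minus_in : forall G chi x, In x (minus G chi) -> In x G.
Proof. intros. apply in_remove in H. tauto. Qed.

Lemma keep : forall G chi extra x, In x G -> x <> chi -> In x (minus G chi ++ extra).
Proof. intros. apply in_or_app. left. apply in_in_remove; auto. Qed.

Lemma sat_all_child : forall c G chi extra, sat_all c G ->
  (forall f, In f extra -> Tr c f) -> sat_all c (minus G chi ++ extra).
Proof.
  intros c G chi extra H1 H2 f Hf. apply in_app_or in Hf. destruct Hf as [Hf|Hf]; auto.
  apply H1. eapply minus_in; eauto.
Qed.

Ltac persist_tac :=
  intros a0 b0 [Hu|Hn] Hb; [left; apply keep; [exact Hu|discriminate] | right; apply keep; [exact Hn|discriminate]].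
Ltac until_tac :=
  intros a0 b0 Hu _; right; apply keep; [exact Hu|discriminate].

Lemma static_step : forall c G ls, static_rule G (SRchildren ls) -> sat_all c G ->
  exists l, In l ls /\ sat_all c l /\
    (forall a b, pres G a b -> ~ In b l -> pres l a b) /\
    (forall a b, In (Until a b) G -> Tr c b -> In b l \/ In (Until a b) l).
Proof.
  intros c G ls HR HS. inversion HR; subst.
  -
    exists (minus G Top ++ []). split; [simpl; rewrite app_nil_r; auto|].
    split; [apply sat_all_child; auto; simpl; tauto|].
    split; [persist_tac|until_tac].
  -
    exists (minus G (And a b) ++ [a; b]). split; [simpl; auto|].
    assert (Hab : Tr c (And a b)) by auto. destruct (proj1 (Tr_And _ _ _) Hab) as [HA HB].
    split; [apply sat_all_child; auto; simpl; intros f Hf; destruct Hf as [Hf|[Hf|[]]]; subst f; auto|].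
    split; [persist_tac|until_tac].
  -
    assert (Hu : Tr c (Until a b)) by auto.
    destruct (classic (Tr c b)) as [Hb|Hb].
    + exists (minus G (Until a b) ++ [b]). split; [simpl; auto|].
      split; [apply sat_all_child; auto; simpl; intros f [<-|[]]; auto|].
      split.
      * intros a0 b0 [Hu0|Hn] Hb0.
        -- destruct (form_eq_dec (Until a0 b0) (Until a b)) as [E|E].
           ++ inversion E; subst. exfalso; apply Hb0. apply in_or_app; right; simpl; auto.
           ++ left; apply keep; auto.
        -- right; apply keep; [exact Hn|discriminate].
      * intros a0 b0 Hu0 Hb0.
        destruct (form_eq_dec (Until a0 b0) (Until a b)) as [E|E].
        -- inversion E; subst. left. apply in_or_app; right; simpl; auto.
        -- right; apply keep; auto.
    + exists (minus G (Until a b) ++ [a; Next (Until a b)]). split; [simpl; auto|].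
      apply Tr_Until in Hu. destruct Hu as [i [Hbi Hai]].
      destruct i as [|i]. { exfalso. apply Hb. rewrite Nat.add_0_r in Hbi. auto. }
      split.
      * apply sat_all_child; auto. simpl. intros f [<-|[<-|[]]].
        -- specialize (Hai 0 ltac:(lia)). rewrite Nat.add_0_r in Hai. auto.
        -- apply Tr_Next. apply Tr_Until. exists i. split.
           ++ replace (S c + i) with (c + S i) by lia. auto.
           ++ intros j Hj. replace (S c + j) with (c + S j) by lia. apply Hai. lia.
      * split.
        -- intros a0 b0 [Hu0|Hn] Hb0.
           ++ destruct (form_eq_dec (Until a0 b0) (Until a b)) as [E|E].
              ** inversion E; subst. right. apply in_or_app; right; simpl; auto.
              ** left; apply keep; auto.
           ++ right; apply keep; [exact Hn|discriminate].
        -- intros a0 b0 Hu0 Hb0.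
           destruct (form_eq_dec (Until a0 b0) (Until a b)) as [E|E].
           ++ inversion E; subst. contradiction.
           ++ right; apply keep; auto.
  -
    exists (minus G (Neg (Neg a)) ++ [a]). split; [simpl; auto|].
    assert (H1 : Tr c (Neg (Neg a))) by auto. rewrite !Tr_Neg in H1.
    split; [apply sat_all_child; auto; simpl; intros f [<-|[]]; apply NNPP; auto|].
    split; [persist_tac|until_tac].
  -
    assert (H1 : Tr c (Neg (And a b))) by auto. rewrite Tr_Neg, Tr_And in H1.
    destruct (classic (Tr c a)) as [Ha|Ha].
    + exists (minus G (Neg (And a b)) ++ [Neg b]). split; [simpl; auto|].
      split; [apply sat_all_child; auto; simpl; intros f [<-|[]]; rewrite Tr_Neg; tauto|].
      split; [persist_tac|until_tac].
    + exists (minus G (Neg (And a b)) ++ [Neg a]). split; [simpl; auto|].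
      split; [apply sat_all_child; auto; simpl; intros f [<-|[]]; rewrite Tr_Neg; tauto|].
      split; [persist_tac|until_tac].
  -
    assert (H1 : Tr c (Neg (Until a b))) by auto. rewrite Tr_Neg in H1.
    assert (Hnb : ~ Tr c b).
    { intro Hb. apply H1. apply Tr_Until. exists 0. rewrite Nat.add_0_r. split; auto. intros; lia. }
    destruct (classic (Tr c a)) as [Ha|Ha].
    + exists (minus G (Neg (Until a b)) ++ [Neg b; Next (Neg (Until a b))]). split; [simpl; auto|].
      split; [apply sat_all_child; auto; simpl; intros f [<-|[<-|[]]]|].
      * rewrite Tr_Neg; auto.
      * rewrite Tr_Next, Tr_Neg. intro H2. apply H1. apply Tr_Until in H2.
        destruct H2 as [i [Hbi Hai]]. apply Tr_Until. exists (S i). split.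
        -- replace (c + S i) with (S c + i) by lia; auto.
        -- intros j Hj. destruct j as [|j]. rewrite Nat.add_0_r; auto.
           replace (c + S j) with (S c + j) by lia. apply Hai. lia.
      * split; [persist_tac|until_tac].
    + exists (minus G (Neg (Until a b)) ++ [Neg a; Neg b]). split; [simpl; auto|].
      split; [apply sat_all_child; auto; simpl; intros f [<-|[<-|[]]]; rewrite Tr_Neg; auto|].
      split; [persist_tac|until_tac].
Qed.

Lemma static_not_poised : forall G ls, static_rule G (SRchildren ls) -> ~ poised G.
Proof.
  intros G ls HR [_ [_ He]]. inversion HR; subst;
  match goal with H : In ?x G |- _ => apply (He _ H) end.
Qed.


Lemma min_exists : forall P : nat -> Prop, (exists n, P n) -> exists m, P m /\ forall k, k < m -> ~ P k.
Proof.
  intros P [n Hn]. revert Hn. induction n as [n IH] using lt_wf_ind. intro Hn.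
  destruct (classic (exists k, k < n /\ P k)) as [[k [Hk Pk]]|Hno].
  - apply (IH k Hk Pk).
  - exists n. split; auto. intros k Hk Pk. apply Hno; eauto.
Qed.

Lemma max_below : forall (P : nat -> Prop) B k, P k -> k < B ->
  exists d, P d /\ d < B /\ forall m, d < m < B -> ~ P m.
Proof.
  intros P B. induction B; intros k Pk Hk. lia.
  destruct (classic (P B)) as [PB|PB].
  - exists B. split; auto. split. lia. intros; lia.
  - assert (k < B). { destruct (Nat.eq_dec k B); subst; [contradiction|lia]. }
    destruct (IHB k Pk H) as [d [Pd [Hd Hm]]]. exists d. split; auto. split. lia.
    intros m Hm'. destruct (Nat.eq_dec m B). subst; auto. apply Hm; lia.
Qed.

Definition cont (L : nat -> label) a b y x :=
  y <= x /\ (forall z, y <= z <= x -> pres (L z) a b) /\ (forall z, y < z <= x -> ~ In b (L z)).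

Definition loop_condL (L : nat -> label) (n : nat) : Prop :=
  exists i, i < n /\ poised (L i) /\ incl (L n) (L i) /\
    forall a b, In (Next (Until a b)) (L i) -> exists w, i < w <= n /\ In b (L w).

Definition target (L : nat -> label) z cz a b y Tz :=
  In (Next (Until a b)) (L z) /\ cont L a b y z /\
  (forall a' b' y', y' < y -> ~ cont L a' b' y' z) /\
  cz < Tz /\ Tr Tz b /\ (forall m, cz < m < Tz -> ~ sat_all m (L z)).

Definition evt (G : label) := exists a b, In (Next (Until a b)) G.

Definition Inv (L : nat -> label) (C : nat -> nat) (n : nat) : Prop :=
  sat_all (C n) (L n) /\
  (forall z, z < n -> poised (L z) -> C z < C n) /\
  (forall z a b, z < n -> pres (L z) a b -> ~ In b (L (S z)) -> pres (L (S z)) a b) /\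
  (forall z, z < n -> poised (L z) -> ~ loop_condL L z) /\
  (forall z, z < n -> poised (L z) -> evt (L z) -> exists a b y Tz, target L z (C z) a b y Tz /\
      ((forall w, z < w <= n -> ~ In b (L w)) -> C n < Tz \/ (C n = Tz /\ In (Until a b) (L n)))).

Section Ext.
Variables (L L' : nat -> label) (n : nat).
Hypothesis HL : forall i, i <= n -> L' i = L i.

Lemma cont_ext : forall a b y x, x <= n -> (cont L' a b y x <-> cont L a b y x).
Proof.
  intros a b y x Hx. unfold cont. split; intros [H1 [H2 H3]]; split; auto; split.
  - intros z Hz. rewrite <- HL by lia. auto.
  - intros z Hz. rewrite <- HL by lia. auto.
  - intros z Hz. rewrite HL by lia. auto.
  - intros z Hz. rewrite HL by lia. auto.
Qed.

Lemma loop_ext : forall z, z <= n -> (loop_condL L' z <-> loop_condL L z).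
Proof.
  intros z Hz. unfold loop_condL. split; intros [i [H1 [H2 [H3 H4]]]]; exists i;
  (split; [auto|]).
  - rewrite <- (HL i), <- (HL z) by lia. split; auto. split; auto.
    intros a b Hn. destruct (H4 a b Hn) as [w [Hw Hb]].
    exists w. split; auto. rewrite <- HL by lia; auto.
  - rewrite (HL i), (HL z) by lia. split; auto. split; auto.
    intros a b Hn. destruct (H4 a b Hn) as [w [Hw Hb]].
    exists w. split; auto. rewrite HL by lia; auto.
Qed.

Lemma target_ext : forall z cz a b y Tz, z <= n ->
  (target L' z cz a b y Tz <-> target L z cz a b y Tz).
Proof.
  intros z cz a b y Tz Hz. unfold target. rewrite (HL z) by lia. rewrite cont_ext by lia.
  split; intros [H1 [H2 [H3 H4]]]; (split; [auto|split; [auto|split; [|auto]]]);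
    intros a' b' y' Hy Hc; apply (H3 a' b' y' Hy).
  - rewrite cont_ext by lia; auto.
  - rewrite <- cont_ext by lia; eauto.
Qed.
End Ext.

Lemma poised_same : forall G1 G2, same_label G1 G2 -> poised G1 -> poised G2.
Proof.
  intros G1 G2 HS [H1 [H2 H3]]. split; [|split].
  - destruct G1 as [|x G1]. contradiction. intro E. subst. apply (proj1 (HS x)). simpl; auto.
  - intros a Ha Hn. apply (H2 a); apply HS; auto.
  - intros f Hf. apply H3. apply HS; auto.
Qed.

Lemma poised_no_until : forall G a b, poised G -> ~ In (Until a b) G.
Proof. intros G a b [_ [_ H]] Hi. apply (H _ Hi). Qed.

Lemma pres_poised : forall G a b, poised G -> pres G a b -> In (Next (Until a b)) G.
Proof. intros G a b HP [H|H]; auto. exfalso; eapply poised_no_until; eauto. Qed.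

Lemma sat_all_same : forall c G1 G2, same_label G1 G2 -> sat_all c G1 -> sat_all c G2.
Proof. intros c G1 G2 HS H f Hf. apply H. apply HS; auto. Qed.

Lemma chain : forall (L : nat -> label) n,
  (forall z a b, z < n -> pres (L z) a b -> ~ In b (L (S z)) -> pres (L (S z)) a b) ->
  forall z x a b, x <= n -> pres (L z) a b -> (forall w, z < w <= x -> ~ In b (L w)) ->
  forall w, z <= w <= x -> pres (L w) a b.
Proof.
  intros L n Hp z x a b Hx Hz Habs w Hw.
  replace w with (z + (w - z)) by lia. assert (w - z <= x - z) by lia.
  generalize dependent (w - z). intro k. induction k; intros Hk.
  - rewrite Nat.add_0_r; auto.
  - replace (z + S k) with (S (z + k)) by lia. apply Hp. lia. apply IHk; lia. apply Habs; lia.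
Qed.

Lemma next_sat : forall c G, sat_all c G -> sat_all (S c) (next_label G).
Proof.
  intros c G H x Hx. unfold next_label in Hx. apply in_flat_map in Hx. destruct Hx as [f [Hf Hx]].
  destruct f; simpl in Hx; try contradiction.
  - destruct f; simpl in Hx; try contradiction. destruct Hx as [<-|[]].
    apply Tr_Neg. rewrite <- Tr_Next. apply (proj1 (Tr_Neg _ _)). apply H; auto.
  - destruct Hx as [<-|[]]. apply Tr_Next. apply H; auto.
Qed.

Lemma next_in : forall G f, In (Next f) G -> In f (next_label G).
Proof. intros. unfold next_label. apply in_flat_map. exists (Next f). simpl; auto. Qed.


Lemma cont_restrict : forall L a b y x z, cont L a b y x -> y <= z -> z <= x -> cont L a b y z.
Proof. intros L a b y x z [H1 [H2 H3]] Hy Hz. split; auto. split; intros; [apply H2|apply H3]; lia. Qed.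

Lemma jump : forall L C n, Inv L C n -> poised (L n) ->
  exists c', C n <= c' /\ sat_all c' (L n) /\
  (forall z a b y Tz, z < n -> target L z (C z) a b y Tz ->
      (forall w, z < w <= n -> ~ In b (L w)) -> C n < Tz -> c' < Tz) /\
  (evt (L n) -> exists a b y Tn, target L n c' a b y Tn).
Proof.
  intros L C n [I1 [I2 [I3 [I5 I4]]]] HP.
  destruct (classic (evt (L n))) as [Hev|Hnev].
  2:{ exists (C n). split; auto. split; auto. split; [|intros; contradiction].
      intros z a b y Tz Hz [HN _] Habs _. exfalso. apply Hnev. exists a, b.
      apply pres_poised; auto. apply (chain L n I3 z n a b); [lia| right; auto | auto | lia]. }
  destruct (min_exists (fun y => exists a b, cont L a b y n)) as [y0 [[a0 [b0 Hc0]] Hmin]].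
  { destruct Hev as [a [b Hab]]. exists n, a, b. split; auto. split.
    - intros z Hz. replace z with n by lia. right; auto.
    - intros; lia. }
  assert (HN0 : In (Next (Until a0 b0)) (L n)).
  { apply pres_poised; auto. apply (proj1 (proj2 Hc0)). destruct Hc0; lia. }
  pose (Q := fun m => C n < m /\ exists a b, cont L a b y0 n /\ Tr m b).
  destruct (min_exists Q) as [T' [[HT' [a1 [b1 [Hc1 Hb1]]]] HminT]].
  { assert (H := I1 _ HN0). apply Tr_Next, Tr_Until in H. destruct H as [i [Hi _]].
    exists (S (C n) + i). split. lia. exists a0, b0. auto. }
  destruct (max_below (fun d => C n <= d /\ sat_all d (L n)) T' (C n)) as [c' [[Hc'1 Hc'2] [Hc'3 Hc'4]]];
    [split; auto | lia |].
  exists c'. split; auto. split; auto. split.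
  - intros z a b y Tz Hz [HN [Hcz [Hminz [HCz [HTz Hmaxz]]]]] Habs HCn.
    assert (Hcn : cont L a b y n).
    { destruct Hcz as [Hy [Hp Ha]]. split. lia. split.
      - intros w Hw. destruct (le_lt_dec w z). apply Hp; lia.
        apply (chain L n I3 z n a b); [lia| right; auto | auto | lia].
      - intros w Hw. destruct (le_lt_dec w z). apply Ha; lia. apply Habs; lia. }
    assert (y0 <= y). { destruct (le_lt_dec y0 y); auto. exfalso. apply (Hmin y); [lia | exists a, b; auto]. }
    assert (y0 = y).
    { destruct (Nat.eq_dec y0 y); auto. exfalso. apply (Hminz a0 b0 y0). lia.
      apply cont_restrict with n; auto; destruct Hcz; lia. }
    subst y0.
    assert (T' <= Tz). { destruct (le_lt_dec T' Tz); auto. exfalso. apply (HminT Tz); auto.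
      split; auto. exists a, b; auto. }
    lia.
  - intros _. exists a1, b1, y0, T'. split; [|split; [auto|split; [|split; [lia|split; [auto|]]]]].
    + apply pres_poised; auto. apply (proj1 (proj2 Hc1)). destruct Hc1; lia.
    + intros a' b' y' Hy' Hc. apply (Hmin y'); eauto.
    + intros m Hm Hs. apply (Hc'4 m). lia. split; auto. lia.
Qed.

Lemma trans_step : forall L C n L', Inv L C n -> poised (L n) -> ~ loop_condL L n ->
  (forall i, i <= n -> L' i = L i) -> L' (S n) = next_label (L n) ->
  exists C', Inv L' C' (S n).
Proof.
  intros L C n L' HI HP HnL HL HL'.
  destruct (jump L C n HI HP) as [c' [Hc1 [Hc2 [Hc3 Hc4]]]].
  destruct HI as [I1 [I2 [I3 [I5 I4]]]].
  exists (fun i => if i <? n then C i else if i =? n then c' else S c').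
  assert (EC : forall i, i < n -> (if i <? n then C i else if i =? n then c' else S c') = C i).
  { intros i Hi. destruct (Nat.ltb_spec i n); lia. }
  assert (ECn : (if n <? n then C n else if n =? n then c' else S c') = c').
  { rewrite Nat.ltb_irrefl, Nat.eqb_refl. auto. }
  assert (ECS : (if S n <? n then C (S n) else if S n =? n then c' else S c') = S c').
  { destruct (Nat.ltb_spec (S n) n). lia. destruct (Nat.eqb_spec (S n) n). lia. auto. }
  unfold Inv; cbv beta; rewrite ECS. split; [|split; [|split; [|split]]].
  - rewrite HL'. apply next_sat; auto.
  - intros z Hz Hpz. destruct (Nat.eq_dec z n).
    + subst. rewrite ECn. lia.
    + rewrite EC by lia. rewrite HL in Hpz by lia. specialize (I2 z ltac:(lia) Hpz). lia.
  - intros z a b Hz Hp Hb. destruct (Nat.eq_dec z n).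
    + subst. rewrite HL'. left. apply next_in. apply pres_poised; auto. rewrite <- HL; auto.
    + rewrite HL in * by lia. apply I3; auto. lia.
  - intros z Hz Hpz. rewrite loop_ext with (L := L) (n := n) by (auto; lia).
    destruct (Nat.eq_dec z n). subst; auto. rewrite HL in Hpz by lia. apply I5; auto. lia.
  - intros z Hz Hpz Hev. destruct (Nat.eq_dec z n).
    + subst. rewrite HL in Hev by lia. destruct (Hc4 Hev) as [a [b [y [Tn Ht]]]].
      exists a, b, y, Tn. rewrite ECn. split. rewrite target_ext with (L := L) (n := n); auto.
      intros _. destruct Ht as [HN [_ [_ [HcT _]]]].
      destruct (Nat.eq_dec (S c') Tn). right. split; auto. rewrite HL'. apply next_in; auto.
      left; lia.
    + rewrite HL in Hpz, Hev by lia. destruct (I4 z ltac:(lia) Hpz Hev) as [a [b [y [Tz [Ht Hpend]]]]].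
      exists a, b, y, Tz. rewrite EC by lia. split. rewrite target_ext with (L := L) (n := n); auto; lia.
      intros Habs.
      assert (Habs' : forall w, z < w <= n -> ~ In b (L w)).
      { intros w Hw. rewrite <- HL by lia. apply Habs; lia. }
      destruct (Hpend Habs') as [Hlt|[_ Hu]]; [|exfalso; exact (poised_no_until _ _ _ HP Hu)].
      assert (c' < Tz) by (apply (Hc3 z a b y Tz); auto; lia).
      destruct (Nat.eq_dec (S c') Tz). 2: left; lia. right. split; auto.
      rewrite HL'. apply next_in. apply pres_poised; auto.
      apply (chain L n I3 z n a b); [lia| right; destruct Ht; auto | auto | lia].
Qed.

Lemma static_stepI : forall L C n ls, Inv L C n -> static_rule (L n) (SRchildren ls) ->
  exists l, In l ls /\ forall L', (forall i, i <= n -> L' i = L i) -> L' (S n) = l ->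
  exists C', Inv L' C' (S n).
Proof.
  intros L C n ls [I1 [I2 [I3 [I5 I4]]]] HR.
  destruct (static_step (C n) (L n) ls HR I1) as [l [Hl [Hs [Hper Hun]]]].
  assert (HnP := static_not_poised _ _ HR).
  exists l. split; auto. intros L' HL HL'.
  exists (fun i => if i <=? n then C i else C n).
  assert (EC : forall i, i <= n -> (if i <=? n then C i else C n) = C i).
  { intros i Hi. destruct (Nat.leb_spec i n); lia. }
  assert (ECS : (if S n <=? n then C (S n) else C n) = C n).
  { destruct (Nat.leb_spec (S n) n). lia. auto. }
  unfold Inv; cbv beta; rewrite ECS. split; [|split; [|split; [|split]]].
  - rewrite HL'; auto.
  - intros z Hz Hpz. destruct (Nat.eq_dec z n).
    + subst z. rewrite HL in Hpz by lia. contradiction.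
    + rewrite EC by lia. rewrite HL in Hpz by lia. apply I2; auto; lia.
  - intros z a b Hz Hp Hb. destruct (Nat.eq_dec z n).
    + subst z. rewrite HL' in *. rewrite HL in Hp by lia. auto.
    + rewrite HL in * by lia. apply I3; auto. lia.
  - intros z Hz Hpz. destruct (Nat.eq_dec z n).
    + subst z. rewrite HL in Hpz by lia. contradiction.
    + rewrite loop_ext with (L := L) (n := n) by (auto; lia). rewrite HL in Hpz by lia. apply I5; auto. lia.
  - intros z Hz Hpz Hev. destruct (Nat.eq_dec z n).
    + subst z. rewrite HL in Hpz by lia. contradiction.
    + rewrite HL in Hpz, Hev by lia. destruct (I4 z ltac:(lia) Hpz Hev) as [a [b [y [Tz [Ht Hpend]]]]].
      exists a, b, y, Tz. rewrite EC by lia. split. rewrite target_ext with (L := L) (n := n); auto; lia.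
      intros Habs.
      assert (Habs' : forall w, z < w <= n -> ~ In b (L w)).
      { intros w Hw. rewrite <- HL by lia. apply Habs; lia. }
      destruct (Hpend Habs') as [Hlt|[Heq Hu]]; [left; auto|].
      right. split; auto. rewrite HL'. destruct Ht as [_ [_ [_ [_ [HTb _]]]]].
      subst Tz. destruct (Hun a b Hu HTb) as [Hb|Hb]; auto.
      exfalso. apply (Habs (S n)). lia. rewrite HL'; auto.
Qed.


Lemma same_sym : forall G1 G2, same_label G1 G2 -> same_label G2 G1.
Proof. intros G1 G2 H x. specialize (H x). tauto. Qed.

Lemma fulfil : forall L C n z a b y Tz, Inv L C n -> poised (L n) -> z < n ->
  same_label (L z) (L n) -> target L z (C z) a b y Tz ->
  ((forall w, z < w <= n -> ~ In b (L w)) -> C n < Tz \/ (C n = Tz /\ In (Until a b) (L n))) ->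
  exists w, z < w <= n /\ In b (L w).
Proof.
  intros L C n z a b y Tz [I1 [I2 [I3 [I5 I4]]]] HP Hz HS Ht Hpend.
  destruct (classic (exists w, z < w <= n /\ In b (L w))) as [H|H]; auto. exfalso.
  assert (Habs : forall w, z < w <= n -> ~ In b (L w)) by (intros w Hw Hb; apply H; eauto).
  destruct (Hpend Habs) as [Hlt|[_ Hu]]; [|exact (poised_no_until _ _ _ HP Hu)].
  assert (HPz : poised (L z)) by (apply poised_same with (L n); auto; apply same_sym; auto).
  specialize (I2 z Hz HPz). destruct Ht as [_ [_ [_ [_ [_ Hmax]]]]].
  apply (Hmax (C n)). lia. apply sat_all_same with (L n); auto. apply same_sym; auto.
Qed.

Definition prune_condL (L : nat -> label) n := exists i j, i < j < n /\
    same_label (L i) (L n) /\ same_label (L j) (L n) /\ poised (L n) /\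
    forall a b, In (Next (Until a b)) (L n) ->
      (exists x, j < x <= n /\ In b (L x)) ->
      exists y, i < y <= j /\ In b (L y).

Lemma prune_contra : forall L C n, Inv L C n -> prune_condL L n -> False.
Proof.
  intros L C n HI [i [j [Hij [Hi [Hj [HP Hcond]]]]]].
  assert (HI' := HI). destruct HI' as [I1 [I2 [I3 [I5 I4]]]].
  assert (HPj : poised (L j)) by (apply poised_same with (L n); auto; apply same_sym; auto).
  assert (HPi : poised (L i)) by (apply poised_same with (L n); auto; apply same_sym; auto).
  assert (Hex : exists a b, In (Next (Until a b)) (L i) /\ forall w, i < w <= j -> ~ In b (L w)).
  { destruct (classic (forall a b, In (Next (Until a b)) (L i) -> exists w, i < w <= j /\ In b (L w)))
      as [Hall|Hnall].
    - exfalso. apply (I5 j ltac:(lia) HPj). exists i. split; [lia|]. split; auto. split; auto.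
      intros x Hx. apply Hi. apply Hj. auto.
    - apply not_all_ex_not in Hnall. destruct Hnall as [a Hnall].
      apply not_all_ex_not in Hnall. destruct Hnall as [b Hnall].
      apply imply_to_and in Hnall. destruct Hnall as [HN Hno].
      exists a, b. split; auto. intros w Hw Hb. apply Hno. eauto. }
  destruct Hex as [a [b [HN Habs]]].
  assert (Hevj : evt (L j)). { exists a, b. apply Hj. apply Hi. auto. }
  destruct (I4 j ltac:(lia) HPj Hevj) as [aj [bj [yj [Tj [Ht Hpend]]]]].
  assert (Hc : cont L a b i j).
  { split. lia. split; auto. intros w Hw.
    apply (chain L n I3 i j a b); [lia | right; auto | auto | lia]. }
  assert (yj <= i).
  { destruct (le_lt_dec yj i); auto. exfalso. destruct Ht as [_ [_ [Hmin _]]]. apply (Hmin a b i); auto. }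
  destruct (fulfil L C n j aj bj yj Tj HI HP ltac:(lia) Hj Ht Hpend) as [x [Hx Hbx]].
  assert (HNj : In (Next (Until aj bj)) (L n)) by (apply Hj; destruct Ht; auto).
  destruct (Hcond aj bj HNj) as [y0 [Hy0 Hb0]]; eauto.
  destruct Ht as [_ [[_ [_ Hab]] _]]. apply (Hab y0); auto. lia.
Qed.

Lemma prune0_contra : forall L C n, Inv L C n ->
  (exists i, i < n /\ same_label (L i) (L n) /\ poised (L n) /\
    (exists a b, In (Next (Until a b)) (L n)) /\
    ~ (exists a b x, In (Next (Until a b)) (L n) /\ i < x <= n /\ In b (L x))) -> False.
Proof.
  intros L C n HI [i [Hi [HS [HP [[a [b Hab]] Hno]]]]].
  assert (HI' := HI). destruct HI' as [I1 [I2 [I3 [I5 I4]]]].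
  assert (HPi : poised (L i)) by (apply poised_same with (L n); auto; apply same_sym; auto).
  assert (Hev : evt (L i)) by (exists a, b; apply HS; auto).
  destruct (I4 i Hi HPi Hev) as [ai [bi [yi [Ti [Ht Hpend]]]]].
  destruct (fulfil L C n i ai bi yi Ti HI HP Hi HS Ht Hpend) as [x [Hx Hbx]].
  apply Hno. exists ai, bi, x. split; auto. apply HS. destruct Ht; auto.
Qed.

Lemma cross_contra : forall c G, static_rule G SRcross -> sat_all c G -> False.
Proof.
  intros c G HR HS. inversion HR; subst.
  - assert (H1 := HS _ H). assert (H2 := HS _ H0). apply Tr_Neg in H2. auto.
  - assert (H1 := HS _ H). apply Tr_Neg in H1. apply H1. unfold Tr; simpl; auto.
Qed.

Lemma nodeL_last : forall anc G, nodeL anc G (length anc) = G.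
Proof. intros. unfold nodeL. rewrite app_nth2 by lia. rewrite Nat.sub_diag. reflexivity. Qed.

Lemma nodeL_snoc : forall anc G G' i, i <= length anc -> nodeL (anc ++ [G]) G' i = nodeL anc G i.
Proof.
  intros. unfold nodeL. rewrite app_nth1. 2: rewrite length_app; simpl; lia. reflexivity.
Qed.

Lemma nodeL_snoc_last : forall anc G G', nodeL (anc ++ [G]) G' (S (length anc)) = G'.
Proof.
  intros. replace (S (length anc)) with (length (anc ++ [G])) by (rewrite length_app; simpl; lia).
  apply nodeL_last.
Qed.

Lemma walk : forall anc t, valid anc t -> forall C,
  Inv (nodeL anc (tlabel t)) C (length anc) -> has_ticked_leaf t.
Proof.
  intros anc t HV. induction HV; intros C HI; simpl in HI.
  - constructor.
  - exfalso. apply (cross_contra (C (length anc)) G); auto.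
    destruct HI as [I1 _]. rewrite nodeL_last in I1. auto.
  - rewrite <- (nodeL_last anc G) in H.
    destruct (static_stepI _ C _ _ HI H) as [l [Hl Hstep]].
    apply in_map_iff in Hl. destruct Hl as [c0 [Hc0 Hin]].
    destruct (Hstep (nodeL (anc ++ [G]) l)) as [C' HI'].
    + intros i Hi. apply nodeL_snoc; auto.
    + apply nodeL_snoc_last.
    + apply htl_inner with c0; auto. apply (H1 c0 Hin C').
      rewrite Hc0, length_app. simpl. replace (length anc + 1) with (S (length anc)) by lia. auto.
  - constructor.
  - exfalso. apply (prune_contra _ C _ HI). unfold prune_cond in H1. unfold prune_condL.
    rewrite nodeL_last. exact H1.
  - exfalso. apply (prune0_contra _ C _ HI). unfold prune0_cond in H2. rewrite nodeL_last. exact H2.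
  - rewrite <- (nodeL_last anc G) in H, H3.
    destruct (trans_step _ C _ (nodeL (anc ++ [G]) (tlabel c)) HI H) as [C' HI'].
    + unfold loop_cond in H0. unfold loop_condL. rewrite nodeL_last. exact H0.
    + intros i Hi. apply nodeL_snoc; auto.
    + rewrite nodeL_snoc_last. auto.
    + apply htl_inner with c; simpl; auto. apply (IHHV C').
      rewrite length_app. simpl. replace (length anc + 1) with (S (length anc)) by lia. auto.
Qed.

End W.

Theorem mainTheorem1 (phi : form) :
  satisfiable phi ->
  forall t : tableau, finished_tableau phi t -> successful t.
Proof.
  intros [St [R [g [sigma [_ [_ [_ Hsat]]]]]]] t [HV Hl].
  apply (walk St g sigma [] t HV (fun _ => 0)).
  rewrite Hl. split; [|split; [|split; [|split]]]; simpl; try (intros; lia).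
  intros f [<-|[]]. unfold Tr. apply (sat_ext g phi sigma); auto.
Qed.
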